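(* Let $(M,d)$ be a compact metric space and $\varphi:M\to M$ continuous, and assume either (C) there is a homeomorphism $\theta$ of $M$ with $\theta\circ\theta=\mathrm{Id}_M$ and $\varphi=\theta\circ\varphi\circ\theta$ (set $\theta_n=\theta$), or (R) $\varphi$ is a homeomorphism and there is a homeomorphism $\theta$ with $\theta\circ\theta=\mathrm{Id}_M$ and $\varphi^{-1}=\theta\circ\varphi\circ\theta$ (set $\theta_n=\theta\circ\varphi^{n-1}$). Then $h_\varphi(\mathbb Q\circ\theta)=h_\varphi(\mathbb Q)$ for every $\mathbb Q\in\mathcal P_\varphi(M)$, and $\mathfrak p_\varphi(\mathcal G\circ\theta)=\mathfrak p_\varphi(\mathcal G)$ for every $\mathcal G\in\mathcal A(M)$, where $\mathcal G\circ\theta=\{G_n\circ\theta_n\}$.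
   Context: $\mathcal P_\varphi(M)$: $\varphi$-invariant Borel probability measures ($\mathbb Q\circ\theta$ is again invariant); $h_\varphi$: Kolmogorov–Sinai entropy. $C(M),B(M)$ continuous/bounded Borel real functions, sup norm; $S_nG=\sum_{k<n}G\circ\varphi^k$; $\mathcal A(M)$: sequences $\{G_n\}\subset B(M)$ with some $\{G^{(k)}\}\subset C(M)$ such that $\lim_k\limsup_nn^{-1}\|G_n-S_nG^{(k)}\|_\infty=0$. $B_n(x,\epsilon)=\{y:d(\varphi^ky,\varphi^kx)<\epsilon,0\le k<n\}$. Topological pressure: $\mathfrak p_\varphi(\mathcal G)=\lim_{\epsilon\downarrow0}\limsup_nn^{-1}\log\inf\{\sum_{x\in E}e^{G_n(x)}:E\text{ finite},\bigcup_{x\in E}B_n(x,\epsilon)=M\}\in(-\infty,+\infty]$. *)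

(* Defs.v *)
From HB Require Import structures.
From mathcomp Require Import all_boot all_order all_algebra.
From mathcomp Require Import all_classical all_reals all_analysis.
Set Implicit Arguments. Unset Strict Implicit. Unset Printing Implicit Defensive.
Import Order.TTheory GRing.Theory Num.Theory.
Import numFieldNormedType.Exports.
Local Open Scope classical_set_scope.
Local Open Scope ring_scope.

Notation borelM M := (g_sigma_algebraType (@open M)).

Section Defs.
Variables (R : realType) (M : pseudoPMetricType R).

Definition borel_sets : set (set M) := <<s @open M >>.


Definition homeomorphism (f : M -> M) : Prop :=
  exists g : M -> M, cancel f g /\ cancel g f /\ continuous f /\ continuous g.

Definition phi_invariant (phi : M -> M) (P : set M -> \bar R) : Prop :=
  forall A, borel_sets A -> P (phi @^-1` A) = P A.

Definition is_borel_partition (m : nat) (A : 'I_m -> set M) : Prop :=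
  (forall i, borel_sets (A i)) /\
  (forall i j, i != j -> A i `&` A j = set0) /\
  (forall x, exists i, A i x).

(* atom of the join xi v phi^-1 xi v ... v phi^-(n-1) xi indexed by w *)
Definition cyl (phi : M -> M) (m : nat) (A : 'I_m -> set M) (n : nat)
  (w : {ffun 'I_n -> 'I_m}) : set M :=
  [set x | forall k : 'I_n, A (w k) (iter k phi x)].

(* H_P( \/_{k<n} phi^-k xi ), with 0 log 0 = 0 (ln 0 = 0 in the library) *)
Definition join_entropy (P : set M -> \bar R) (phi : M -> M) (m : nat)
  (A : 'I_m -> set M) (n : nat) : R :=
  \sum_(w : {ffun 'I_n -> 'I_m})
    - (fine (P (cyl phi A w)) * ln (fine (P (cyl phi A w)))).

(* h(P, phi, xi) = lim_n n^-1 H(...) (limit exists; written as limsup) *)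
Definition entropy_part (P : set M -> \bar R) (phi : M -> M) (m : nat)
  (A : 'I_m -> set M) : \bar R :=
  limn_esup (fun n => ((n%:R)^-1 * join_entropy P phi A n)%:E).

Definition ks_entropy (P : set M -> \bar R) (phi : M -> M) : \bar R :=
  ereal_sup [set e | exists (m : nat) (A : 'I_m -> set M),
    is_borel_partition A /\ e = entropy_part P phi A].

Definition bowen_ball (phi : M -> M) (n : nat) (x : M) (e : R) : set M :=
  [set y | forall k, (k < n)%N -> ball (iter k phi x) e (iter k phi y)].

Definition cover_inf (phi : M -> M) (g : M -> R) (n : nat) (e : R) : \bar R :=
  ereal_inf [set ((\sum_(x <- s) expR (g x))%:E) | s in
    [set s : seq M | forall y, exists2 x, x \in s & bowen_ball phi n x e y]].

Definition elog (x : \bar R) : \bar R :=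
  match x with
  | EFin r => if (0 < r) then (ln r)%:E else -oo%E
  | +oo%E => +oo%E
  | -oo%E => -oo%E
  end.

(* p_phi(G) = lim_{e -> 0} limsup_n n^-1 log inf{...};
   the inner quantity is nonincreasing in e, so the limit is the sup over e>0 *)
Definition pressure (phi : M -> M) (G : nat -> M -> R) : \bar R :=
  ereal_sup [set limn_esup (fun n => ((n%:R)^-1)%:E * elog (cover_inf phi (G n) n e))%E
            | e in [set e : R | 0 < e]].

Definition birkhoff_sum (phi : M -> M) (g : M -> R) (n : nat) : M -> R :=
  fun x => \sum_(k < n) g (iter k phi x).

Definition supnorm (f : M -> R) : \bar R :=
  ereal_sup [set (`|f x|)%:E | x in [set: M]].

Definition bounded_borel (f : M -> R) : Prop :=
  (exists C : R, forall x, `|f x| <= C) /\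
  @measurable_fun _ _ (borelM M) R [set: M] f.

Definition in_A (phi : M -> M) (G : nat -> M -> R) : Prop :=
  (forall n, bounded_borel (G n)) /\
  exists Gk : nat -> M -> R, (forall k, continuous (Gk k)) /\
    (fun k => limn_esup (fun n =>
        ((n%:R)^-1)%:E * supnorm (G n \- birkhoff_sum phi (Gk k) n)%R)%E)
      @ \oo --> 0%E.

End Defs.

(* Main.v *)
Require Import Defs.
From HB Require Import structures.
From mathcomp Require Import all_boot all_order all_algebra.
From mathcomp Require Import all_classical all_reals all_analysis.
From mathcomp Require Import zify.
From Stdlib Require Import Lia.
Import Order.TTheory GRing.Theory Num.Theory.
Import numFieldNormedType.Exports.
Local Open Scope classical_set_scope.
Local Open Scope ring_scope.

Section Aux.
Context {R : realType} {M : pseudoPMetricType R}.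

Lemma borel_pre (f : M -> M) : continuous f ->
  forall A, borel_sets A -> borel_sets (f @^-1` A).
Proof.
move=> fc.
have mf : measurable_fun (setT : set (borelM M)) (f : borelM M -> borelM M).
  apply: (@measurability _ _ (borelM M) (borelM M) setT f (@open M)); first by [].
  move=> _ [B oB <-]; apply: sub_sigma_algebra; rewrite setTI.
  exact: (proj1 (continuousP f) fc).
by move=> A hA; have := mf measurableT A hA; rewrite setTI.
Qed.

Lemma borel_iter_pre (f : M -> M) : continuous f ->
  forall k A, borel_sets A -> borel_sets (iter k f @^-1` A).
Proof.
move=> fc; elim=> [|k IH] A hA; first by [].
exact: (IH _ (borel_pre _ fc _ hA)).
Qed.

Lemma borel_cyl (phi : M -> M) (m : nat) (A : 'I_m -> set M) n
  (w : {ffun 'I_n -> 'I_m}) : continuous phi -> (forall i, borel_sets (A i)) ->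
  borel_sets (cyl phi A w).
Proof.
move=> pc hA.
pose F := fun i : nat => match @insub _ (fun j => j < n)%N _ i with
  | Some k => iter (nat_of_ord k) phi @^-1` A (w k) | None => setT end.
have -> : cyl phi A w = \bigcap_i F i.
  apply/seteqP; split=> x /=.
    move=> H i _; rewrite /F; case: insubP => [k _ _|_] //; exact: H.
  move=> H k; have := H (nat_of_ord k) I; rewrite /F valK; exact.
apply: (@bigcapT_measurable _ (borelM M)) => i; rewrite /F.
case: insubP => [k _ _|_]; last exact: (@measurableT _ (borelM M)).
exact: borel_iter_pre.
Qed.

Lemma unif_cont (f : M -> M) : compact [set: M] -> continuous f ->
  forall e : R, 0 < e -> exists2 del : R, 0 < del &
    forall y z, ball y del z -> ball (f y) e (f z).
Proof.
move=> cM fc e e0.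
pose P := fun (n : nat) (y : M) => forall z, ball y (n.+1%:R^-1) z -> ball (f y) e (f z).
have : \forall n \near \oo, [set: M] `<=` P n.
  apply: (proj1 (compact_near_coveringP _) cM) => x _.
  have : nbhs x (f @^-1` ball (f x) (e / 2)).
    apply: fc; exact: nbhsx_ballx (divr_gt0 e0 _).
  move=> /nbhs_ballP [eta /= eta0 Heta].
  exists (ball x (eta / 2), [set n : nat | n.+1%:R^-1 < eta / 2]).
    split => /=; first exact: nbhsx_ballx (divr_gt0 eta0 _).
    exact: (near_infty_natSinv_lt (PosNum (divr_gt0 eta0 (ltr0Sn _ 1%N)))).
  move=> [y n] /= [bxy hn] z byz.
  apply: (@ball_splitr _ _ (f x)).
    apply: Heta; apply: (le_ball _ bxy).
    by rewrite ler_pdivrMr // ler_peMr // ?ler1n // ltW.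
  apply: Heta; rewrite (splitr eta); apply: ball_triangle bxy _.
  exact: le_ball (ltW hn) _ byz.
move=> /filter_ex [n Hn]; exists (n.+1%:R^-1) => //.
by move=> y z; apply: Hn.
Qed.

Local Open Scope ereal_scope.
Lemma elog_le (x y : \bar R) : x <= y -> elog x <= elog y.
Proof.
case: x => [r| |]; case: y => [s| |] //=.
- rewrite lee_fin => rs; case: (ltP 0%R r) => r0; last exact: leNye.
  have s0 : (0 < s)%R by exact: (lt_le_trans r0 rs).
  by rewrite s0 lee_fin ler_ln // posrE.
- by move=> _; case: ifP => _; rewrite ?leey ?leNye.
- by move=> _; exact: leNye.
Qed.

Lemma limn_esup_le (u v : nat -> \bar R) : (forall n, u n <= v n) ->
  limn_esup u <= limn_esup v.
Proof.
move=> uv; rewrite /limn_esup /limf_esup.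
apply: le_ereal_inf_tmp => _ [V FV <-].
apply: (@le_trans _ _ (ereal_sup (u @` V))).
  by apply: ereal_inf_lbound; exists V.
apply: ge_ereal_sup => _ [n Vn <-]; apply: le_trans (uv n) _.
by apply: ereal_sup_ubound; exists n.
Qed.

Lemma cover_inf_le {phi psi : M -> M} {G H : M -> R} {n} {e del : R}
  (Hinv : forall x, psi (psi x) = x) (HG : forall x, H x = G (psi x))
  (hb : forall x z, bowen_ball phi n x del z -> bowen_ball phi n (psi x) e (psi z)) :
  cover_inf phi G n e <= cover_inf phi H n del.
Proof.
rewrite /cover_inf; apply: ereal_inf_le_tmp => _ [s hs <-]; exists (map psi s).
  move=> y; have [x xs hx] := hs (psi y); exists (psi x); first exact: map_f.
  by rewrite -(Hinv y); exact: hb.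
by rewrite big_map; congr EFin; apply: eq_bigr => x _; rewrite HG.
Qed.

Lemma pressure_le (phi : M -> M) (G H : nat -> M -> R) (psi : nat -> M -> M)
  (Hinv : forall n x, psi n (psi n x) = x) (HG : forall n x, H n x = G n (psi n x))
  (hu : forall e : R, (0 < e)%R -> exists2 del : R, (0 < del)%R &
     forall n x z, bowen_ball phi n x del z -> bowen_ball phi n (psi n x) e (psi n z)) :
  pressure phi G <= pressure phi H.
Proof.
rewrite /pressure; apply: ge_ereal_sup => _ [e e0 <-].
have [del del0 hb] := hu e e0.
apply: (@le_trans _ _ (limn_esup (fun n => ((n%:R)^-1)%:E * elog (cover_inf phi (H n) n del)))).
  apply: limn_esup_le => n; apply: lee_wpmul2l; first by rewrite lee_fin invr_ge0.
  by apply: elog_le; exact: (cover_inf_le (Hinv n) (HG n) (hb n)).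
by apply: ereal_sup_ubound; exists del.
Qed.

Lemma partition_pre (theta : M -> M) (tc : continuous theta) m (A : 'I_m -> set M) :
  is_borel_partition A -> is_borel_partition (fun i => theta @^-1` A i).
Proof.
case=> [hB [hD hC]]; split; first by move=> i; exact: borel_pre.
split; last by move=> x; exact: hC (theta x).
by move=> i j ij; rewrite -preimage_setI (hD i j ij) preimage_set0.
Qed.

Lemma ks_eq (P P' : set M -> \bar R) (phi theta : M -> M) (thc : continuous theta)
  (thi : forall x, theta (theta x) = x)
  (H : forall m (A : 'I_m -> set M), is_borel_partition A -> forall n,
     join_entropy P' phi A n = join_entropy P phi (fun i => theta @^-1` A i) n) :
  ks_entropy P' phi = ks_entropy P phi.
Proof.
rewrite /ks_entropy; congr ereal_sup; apply/seteqP; split => _ [m [A [pA ->]]].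
- exists m, (fun i => theta @^-1` A i); split; first exact: partition_pre.
  rewrite /entropy_part; congr limn_esup; apply: funext => n; by rewrite H.
- exists m, (fun i => theta @^-1` A i); split; first exact: partition_pre.
  rewrite /entropy_part; congr limn_esup; apply: funext => n; rewrite H /=; last exact: partition_pre.
  have -> // : (fun i => theta @^-1` (theta @^-1` A i)) = A.
  by apply: funext => i; apply/seteqP; split => x /=; rewrite thi.
Qed.

Lemma join_C (Q : set M -> \bar R) (phi theta : M -> M)
  (hcomm : forall k x, iter k phi (theta x) = theta (iter k phi x))
  m (A : 'I_m -> set M) n :
  join_entropy (fun B => Q (theta @^-1` B)) phi A n
  = join_entropy Q phi (fun i => theta @^-1` A i) n.
Proof.
rewrite /join_entropy; apply: eq_bigr => w _ /=.
have -> // : theta @^-1` cyl phi A w = cyl phi (fun i => theta @^-1` A i) w.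
apply/seteqP; split => x /= h k; [have := h k; rewrite hcomm; exact | rewrite hcomm; exact: h k].
Qed.

Lemma inv_iter {Q : set M -> \bar R} {phi : M -> M} (pc : continuous phi)
  (hQ : phi_invariant phi Q) : forall k S, borel_sets S -> Q (iter k phi @^-1` S) = Q S.
Proof.
elim=> [//|k IH] S hS.
change (Q (iter k phi @^-1` (phi @^-1` S)) = Q S).
by rewrite IH ?hQ //; exact: borel_pre.
Qed.

Lemma iter_inv (phi phinv : M -> M) (hcan : cancel phi phinv) j m x : (j <= m)%N ->
  iter j phinv (iter m phi x) = iter (m - j) phi x.
Proof.
move=> jm; rewrite -{1}(subnKC jm) iterD.
elim: j {jm} (iter (m - j) phi x) => [//|j IH] y.
by rewrite [iter j.+1 phi y]iterS iterSr hcan IH.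
Qed.

Lemma join_R (Q : set M -> \bar R) (phi phinv theta : M -> M)
  (pc : continuous phi) (tc : continuous theta) (hcan : cancel phi phinv)
  (hQ : phi_invariant phi Q)
  (hcomm : forall k x, iter k phi (theta x) = theta (iter k phinv x))
  m (A : 'I_m -> set M) (hA : forall i, borel_sets (A i)) n :
  join_entropy (fun B => Q (theta @^-1` B)) phi A n
  = join_entropy Q phi (fun i => theta @^-1` A i) n.
Proof.
pose rv := fun w : {ffun 'I_n -> 'I_m} => [ffun k => w (rev_ord k)].
have rvK : involutive rv by move=> w; apply/ffunP => k; rewrite !ffunE rev_ordK.
have key : forall (k : 'I_n) x, iter k phinv (iter n.-1 phi x) = iter (rev_ord k) phi x.
  move=> k x; rewrite (iter_inv _ _ hcan); last by case: k => /= k kn; lia.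
  by congr iter; case: k => /= k kn; lia.
have keyQ : forall w, Q (theta @^-1` cyl phi A w) = Q (cyl phi (fun i => theta @^-1` A i) (rv w)).
  move=> w; rewrite -(inv_iter pc hQ n.-1); last by apply: borel_pre => //; exact: borel_cyl.
  congr Q; apply/seteqP; split => x /= h k.
    have := h (rev_ord k); rewrite ffunE hcomm key rev_ordK; exact.
  rewrite hcomm key; have := h (rev_ord k); rewrite ffunE rev_ordK; exact.
rewrite /join_entropy /=.
under eq_bigr do rewrite keyQ.
rewrite (reindex_inj (inv_inj rvK)) /=; apply: eq_bigr => w _; by rewrite rvK.
Qed.
End Aux.

Theorem lemma3p7 (R : realType) (M : pseudoPMetricType R) (d : M -> M -> R)
  (d_sep : forall x y, d x y = 0 <-> x = y)
  (d_sym : forall x y, d x y = d y x)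
  (d_tri : forall x y z, d x z <= d x y + d y z)
  (d_ball : forall (x y : M) (e : R), 0 < e -> ball x e y <-> d x y < e)
  (M_compact : compact [set: M])
  (phi : M -> M) (phi_cont : continuous phi)
  (theta : M -> M) (thetas : nat -> M -> M)
  (hcase :
     (* (C) *)
     (homeomorphism theta /\ theta \o theta = id /\
      phi = theta \o phi \o theta /\ thetas = (fun _ => theta))
     \/
     (* (R) *)
     (exists phi_inv : M -> M,
        cancel phi phi_inv /\ cancel phi_inv phi /\ continuous phi_inv /\
        homeomorphism theta /\ theta \o theta = id /\
        phi_inv = theta \o phi \o theta /\
        thetas = (fun n => theta \o iter n.-1 phi))) :
  (forall Q : probability (borelM M) R,
     phi_invariant phi (Q : set M -> \bar R) ->
     ks_entropy (fun A : set M => Q (theta @^-1` A)) phi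
       = ks_entropy (Q : set M -> \bar R) phi) /\
  (forall G : nat -> M -> R, in_A phi G ->
     pressure phi (fun n => G n \o thetas n) = pressure phi G).
Proof.
case: hcase => [[hth [tt [pe ->]]]|[phinv [hcan [hcan' [pic [hth [tt [pe ->]]]]]]]].
- have [g [_ [_ [thc _]]]] := hth.
  have thi x : theta (theta x) = x by have := congr1 (fun f => f x) tt.
  have hc1 y : phi (theta y) = theta (phi y) by rewrite {1}pe /= thi.
  have hcomm k x : iter k phi (theta x) = theta (iter k phi x).
    by elim: k => [//|k IH]; rewrite /= IH hc1.
  split.
    move=> Q hQ; apply: (ks_eq Q _ phi theta thc thi) => m A pA n.
    exact: (join_C _ _ _ hcomm).
  move=> G _.
  have hu : forall e : R, (0 < e)%R -> exists2 del : R, (0 < del)%R &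
     forall n x z, bowen_ball phi n x del z ->
       bowen_ball phi n ((fun _ : nat => theta) n x) e ((fun _ : nat => theta) n z).
    move=> e e0; have [del d0 hd] := unif_cont _ M_compact thc _ e0.
    exists del => // n x z hb k kn; rewrite !hcomm; apply: hd; exact: hb k kn.
  apply: le_anti; apply/andP; split.
    by apply: (pressure_le phi _ _ (fun _ => theta)) => // n x /=; rewrite thi.
  by apply: (pressure_le phi _ _ (fun _ => theta)).
- have [g [_ [_ [thc _]]]] := hth.
  have thi x : theta (theta x) = x by have := congr1 (fun f => f x) tt.
  have hc1 y : phi (theta y) = theta (phinv y) by rewrite pe /= thi.
  have hcomm k x : iter k phi (theta x) = theta (iter k phinv x).
    by elim: k => [//|k IH]; rewrite /= IH hc1.
  split.
    move=> Q hQ; apply: (ks_eq Q _ phi theta thc thi) => m A [hA _] n.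
    exact: (join_R _ _ _ _ phi_cont thc hcan hQ hcomm _ _ hA n).
  move=> G _.
  pose psi := fun n : nat => theta \o iter n.-1 phi.
  have Hinv n x : psi n (psi n x) = x.
    by rewrite /psi /= hcomm thi (iter_inv _ _ hcan) // subnn.
  have hu : forall e : R, (0 < e)%R -> exists2 del : R, (0 < del)%R &
     forall n x z, bowen_ball phi n x del z ->
       bowen_ball phi n (psi n x) e (psi n z).
    move=> e e0; have [del d0 hd] := unif_cont _ M_compact thc _ e0.
    exists del => // n x z hb k kn; rewrite /psi /= !hcomm.
    have kn' : (k <= n.-1)%N by lia.
    rewrite !(iter_inv _ _ hcan _ _ _ kn').
    by apply: hd; apply: hb; lia.
  apply: le_anti; apply/andP; split.
    by apply: (pressure_le phi _ _ psi) => // n x; rewrite -{1}(Hinv n x).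
  by apply: (pressure_le phi G _ psi Hinv _ hu).
Qed.
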